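(* Let $Q=\langle b\rangle\ltimes_{(g,\gamma)}X$. Then the congruence of $Q$ induced by the abelian normal subgroup $1\times X$ is abelian if and only if $Q$ is a group.
   Context: Let $(X,+)$ be an abelian group and $(g,\gamma)$ a construction pair on it: $g$ a permutation of $X$, $\gamma:X\times X\to X$ symmetric, alternating, biadditive, with (C1) $g^{-1}(g(x)+g(y))=x+y+\gamma(x,y)+g^{-1}(\gamma(x,y))+g^{-2}(\gamma(x,y))$, (C2) $\gamma(\gamma(x,y),z)=0$, (C3) $g^{-1}(\gamma(x,y))=\gamma(g(x),y)$ for all $x,y,z$. Let $\mathrm{Rad}(\gamma)=\{x:\gamma(x,y)=0\ \forall y\}$ and $r(g,\gamma)$ the least positive $r$ with $\sum_{0\le k<r}g^k(x)\in\mathrm{Rad}(\gamma)$ for all $x$ ($\infty$ if none). $I(i,j)$ is $\emptyset$ if $i=j$, $\{i,\dots,j-1\}$ if $i<j$, $\{j,\dots,i-1\}$ if $j<i$. For a cyclic group $C=\langle b\rangle$ such that (if finite) $|g|$ and $r(g,\gamma)$ divide $|C|$, $C\ltimes_{(g,\gamma)}X$ is the Moufang loop on $C\times X$ with multiplication $(b^i,x)(b^j,y)=(b^{i+j},g^{-j}(x)+y+\sum_{k\in I(i+j,-j)}g^{-k}(\gamma(x,y)))$, neutral element $(1,0)$. In a loop $Q$ let $L_x(y)=xy$, $R_x(y)=yx$, $T_x=R_x^{-1}L_x$, $L_{x,y}=L_{xy}^{-1}L_xL_y$, $R_{x,y}=R_{xy}^{-1}R_yR_x$. A normal subloop $N$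 induces the congruence $\rho_N=\{(u,v):uN=vN\}$. For congruences $\rho,\sigma$ of $Q$, the commutator $[\rho,\sigma]_Q$ is the congruence generated by all pairs $(T_{b_1}(a),T_{c_1}(a))$, $(L_{b_1,b_2}(a),L_{c_1,c_2}(a))$, $(R_{b_1,b_2}(a),R_{c_1,c_2}(a))$ with $1\,\rho\, a$, $b_1\,\sigma\, c_1$, $b_2\,\sigma\,c_2$. A congruence $\rho$ is abelian if $[\rho,\rho]_Q$ is the identity relation. *)

(* Defs.v *)
From HB Require Import structures.
From mathcomp Require Import all_boot all_order all_algebra.
Set Implicit Arguments. Unset Strict Implicit. Unset Printing Implicit Defensive.
Import Order.TTheory GRing.Theory Num.Theory.
Local Open Scope ring_scope.

(* Left/right translations L_x, R_x are bijections in a loop; their    *)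
(* inverses are expressed relationally ("the z with ...").             *)
Section Loops.
Variables (T : Type) (mul : T -> T -> T) (one : T).

Definition loop_congruence (th : T -> T -> Prop) : Prop :=
  (forall x, th x x) /\
  (forall x y, th x y -> th y x) /\
  (forall x y z, th x y -> th y z -> th x z) /\
  (forall x x' y y', th x x' -> th y y' -> th (mul x y) (mul x' y')) /\
      (* left division: x \ u = z iff x * z = u *)
      (forall x x' u u' z z', th x x' -> th u u' ->
          mul x z = u -> mul x' z' = u' -> th z z') /\
      (* right division: u / y = z iff z * y = u *)
      (forall y y' u u' z z', th y y' -> th u u' ->
          mul z y = u -> mul z' y' = u' -> th z z').

Definition cong_gen (P : T -> T -> Prop) (u v : T) : Prop :=
  forall th, loop_congruence th -> (forall a b, P a b -> th a b) -> th u v.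

Definition normal_cong (N : T -> Prop) (u v : T) : Prop :=
  forall w, (exists m, N m /\ w = mul u m) <-> (exists m, N m /\ w = mul v m).

(* generators of [rho, sigma]:
   T_b(a) = R_b^{-1}(L_b a)              : the z with  z*b = b*a
   L_{b1,b2}(a) = L_{b1 b2}^{-1} L_b1 L_b2 a : the z with (b1*b2)*z = b1*(b2*a)
   R_{b1,b2}(a) = R_{b1 b2}^{-1} R_b2 R_b1 a : the z with z*(b1*b2) = (a*b1)*b2 *)
Definition commutator_gens (rho sigma : T -> T -> Prop) (u v : T) : Prop :=
  (exists a b1 c1, [/\ rho one a, sigma b1 c1,
       mul u b1 = mul b1 a & mul v c1 = mul c1 a])
  \/ (exists a b1 b2 c1 c2, [/\ rho one a, sigma b1 c1, sigma b2 c2,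
       mul (mul b1 b2) u = mul b1 (mul b2 a) &
       mul (mul c1 c2) v = mul c1 (mul c2 a)])
  \/ (exists a b1 b2 c1 c2, [/\ rho one a, sigma b1 c1, sigma b2 c2,
       mul u (mul b1 b2) = mul (mul a b1) b2 &
       mul v (mul c1 c2) = mul (mul a c1) c2]).

Definition loop_commutator (rho sigma : T -> T -> Prop) : T -> T -> Prop :=
  cong_gen (commutator_gens rho sigma).

Definition abelian_cong (rho : T -> T -> Prop) : Prop :=
  forall u v, loop_commutator rho rho u v -> u = v.

Definition loop_is_group : Prop := associative mul.

End Loops.

Section ConstructionPair.
Variables (X : zmodType) (g ginv : X -> X) (gam : X -> X -> X).

(* integer powers g^k ; ginv is the inverse permutation of g *)
Definition gpow (k : int) (x : X) : X :=
  match k with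
  | Posz m => iter m g x
  | Negz m => iter m.+1 ginv x
  end.

Definition construction_pair : Prop :=
  cancel g ginv /\ cancel ginv g /\
      (forall x y, gam x y = gam y x) /\
      (forall x, gam x x = 0) /\
      (forall x y z, gam (x + y) z = gam x z + gam y z) /\
      (forall x y z, gam x (y + z) = gam x y + gam x z) /\
      (forall x y, ginv (g x + g y) =
          x + y + gam x y + ginv (gam x y) + ginv (ginv (gam x y))) /\
      (forall x y z, gam (gam x y) z = 0) /\
      (forall x y, ginv (gam x y) = gam (g x) y).

Definition inRad (x : X) : Prop := forall y, gam x y = 0.

Definition r_prop (r : nat) : Prop :=
  forall x, inRad (\sum_(k < r) iter k g x).

Definition is_r_g_gam (r : nat) : Prop :=
  [/\ (0 < r)%N, r_prop r & forall r', (0 < r')%N -> (r' < r)%N -> ~ r_prop r'].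

Definition is_order_g (m : nat) : Prop :=
  [/\ (0 < m)%N, (forall x, iter m g x = x) &
      forall m', (0 < m')%N -> (m' < m)%N -> ~ (forall x, iter m' g x = x)].

(* admissibility of the cyclic group C of order n (n = 0 encodes C
   infinite cyclic): if C is finite, |g| and r(g,gamma) divide |C| *)
Definition cyclic_admissible (n : nat) : Prop :=
  (0 < n)%N ->
  (exists m, is_order_g m /\ (m %| n)%N) /\
  (exists r, is_r_g_gam r /\ (r %| n)%N).

Definition Isum (i j : int) (F : int -> X) : X :=
  if i < j then \sum_(t < `|j - i|%N) F (i + t%:Z)
  else \sum_(t < `|i - j|%N) F (j + t%:Z).

End ConstructionPair.

(* The loop  C x_(g,gamma) X  with C = <b> cyclic of order n           *)
(* (n = 0: infinite cyclic).  b^i is represented by the integer i,     *)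
(* reduced modulo n (i.e. 0 <= i < n if n > 0, any integer if n = 0).  *)
Definition Qcar (X : zmodType) (n : nat) :=
  {p : (int * X)%type | (p.1 %% n%:Z)%Z == p.1}.

Lemma Qcar_closed (X : zmodType) (n : nat) (i : int) (x : X) :
  let p := (((i %% n%:Z)%Z, x) : int * X) in (p.1 %% n%:Z)%Z == p.1.
Proof. by rewrite /= modz_mod. Qed.

Definition Qmk (X : zmodType) (n : nat) (i : int) (x : X) : Qcar X n :=
  @exist (int * X)%type (fun p => (p.1 %% n%:Z)%Z == p.1) _ (Qcar_closed n i x).

Definition Qmul (X : zmodType) (n : nat) (g ginv : X -> X)
    (gam : X -> X -> X) (u v : Qcar X n) : Qcar X n :=
  let i := (val u).1 in let x := (val u).2 in
  let j := (val v).1 in let y := (val v).2 in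
  Qmk n (i + j)
    (gpow g ginv (- j) x + y +
     Isum (i + j) (- j) (fun k => gpow g ginv (- k) (gam x y))).

Definition Qone (X : zmodType) (n : nat) : Qcar X n := Qmk n 0 0.

Definition QN (X : zmodType) (n : nat) (u : Qcar X n) : Prop := (val u).1 = 0.

(* Main.v *)
Require Import Defs.
From HB Require Import structures.
From mathcomp Require Import all_boot all_order all_algebra zify.
Set Implicit Arguments. Unset Strict Implicit. Unset Printing Implicit Defensive.
Import Order.TTheory GRing.Theory Num.Theory.
Local Open Scope ring_scope.

Ltac dcp H := case: (H) => gK [ginvK [gamC [gamxx [gamDl [gamDr [C1 [C2 C3]]]]]]].

Lemma gam0l (X : zmodType) (g ginv : X -> X) gam :
  construction_pair g ginv gam -> forall y, gam 0 y = 0.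
Proof.
move=> H; dcp H => y; have h := gamDl 0 0 y; rewrite addr0 in h.
by apply: (@addrI _ (gam 0 y)); rewrite -h addr0.
Qed.

Lemma gam0r (X : zmodType) (g ginv : X -> X) gam :
  construction_pair g ginv gam -> forall y, gam y 0 = 0.
Proof. move=> H y; case: (H) => _ [_ [gamC _]]; by rewrite gamC (gam0l H). Qed.

Lemma ginv0 (X : zmodType) (g ginv : X -> X) gam :
  construction_pair g ginv gam -> ginv 0 = 0.
Proof.
move=> H; dcp H.
by rewrite -{1}(gam0l H 0) C3 (gam0r H).
Qed.

Lemma g0 (X : zmodType) (g ginv : X -> X) gam :
  construction_pair g ginv gam -> g 0 = 0.
Proof. move=> H; dcp H; by rewrite -{1}(ginv0 H) ginvK. Qed.

Lemma gswap (X : zmodType) (g ginv : X -> X) gam :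
  construction_pair g ginv gam -> forall x y, gam x (ginv y) = g (gam x y).
Proof.
move=> H x y; dcp H.
have : ginv (gam (ginv y) x) = gam y x by rewrite C3 ginvK.
move/(congr1 g); rewrite ginvK => e.
by rewrite gamC e gamC.
Qed.

Lemma ginvD (X : zmodType) (g ginv : X -> X) gam :
  construction_pair g ginv gam -> forall x y,
  ginv (x + y) = ginv x + ginv y + g (g (gam x y)) + g (gam x y) + gam x y.
Proof.
move=> H x y; dcp H.
have e : gam (ginv x) (ginv y) = g (g (gam x y)).
  by rewrite (gswap H) gamC (gswap H) gamC.
by rewrite -{1}(ginvK x) -{1}(ginvK y) C1 e !gK.
Qed.

Lemma ginvDg (X : zmodType) (g ginv : X -> X) gam :
  construction_pair g ginv gam -> forall x a b,
  ginv (x + g (gam a b)) = ginv x + gam a b.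
Proof.
move=> H x a b; dcp H.
rewrite -{1}(ginvK x) C1 (gamC (ginv x)) C2 (ginv0 H) (ginv0 H); by rewrite !addr0.
Qed.

Lemma Qmk_eq (X : zmodType) n i j (x y : X) :
  (i %% n%:Z)%Z = (j %% n%:Z)%Z -> x = y -> Qmk n i x = Qmk n j y.
Proof. by move=> h ->; apply: val_inj; rewrite /= h. Qed.

Lemma Qrep (X : zmodType) n (u : Qcar X n) : ((val u).1 %% n%:Z)%Z = (val u).1.
Proof. exact: eqP (valP u). Qed.

Lemma Qeta (X : zmodType) n (u : Qcar X n) : u = Qmk n (val u).1 (val u).2.
Proof.
apply: val_inj; rewrite /=.
have := Qrep u; rewrite /= => ->; by case: (sval u).
Qed.

Lemma mod1n n : n <> 1%N -> (1 %% n%:Z)%Z = 1.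
Proof.
case: n => [|[|n]] h; first by rewrite modz0.
  by case: h.
by rewrite modz_small.
Qed.

Lemma mulN0 (X : zmodType) n (g ginv : X -> X) gam (y : X) (p : Qcar X n) :
  (val p).1 = 0 ->
  Qmul g ginv gam (Qmk n 0 y) p = Qmk n 0 (y + (val p).2).
Proof.
move=> hp; rewrite /Qmul /= hp mod0z add0r /Isum /= big_ord0 addr0.
by [].
Qed.

Lemma mulN1 (X : zmodType) n (g ginv : X -> X) gam (x w : X) : n <> 1%N ->
  Qmul g ginv gam (Qmk n 0 x) (Qmk n 1 w) =
  Qmk n 1 (ginv x + w + g (gam x w) + gam x w).
Proof.
move=> hn; rewrite /Qmul /= mod1n // mod0z add0r /Isum /=.
rewrite !big_ord_recl big_ord0 /= addr0.
rewrite addrA.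
by [].
Qed.

Lemma Nrel (X : zmodType) n (g ginv : X -> X) gam (x y : X) :
  normal_cong (Qmul g ginv gam) (@QN X n) (Qmk n 0 x) (Qmk n 0 y).
Proof.
move=> w; split => -[m [hm ->]]; rewrite mulN0 //.
  exists (Qmk n 0 (x + (val m).2 - y)); split; first by rewrite /QN /= mod0z.
  rewrite mulN0 /= ?mod0z //; congr Qmk; by rewrite [RHS]addrC subrK.
exists (Qmk n 0 (y + (val m).2 - x)); split; first by rewrite /QN /= mod0z.
rewrite mulN0 /= ?mod0z //; congr Qmk; by rewrite [RHS]addrC subrK.
Qed.

Lemma admiss1 (X : zmodType) (g ginv : X -> X) gam :
  cyclic_admissible g gam 1 -> forall x y, gam x y = 0.
Proof.
move=> /(_ isT) [_ [r [[r0 hr _] d1]]] x y.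
have r1 : r = 1%N by apply/eqP; rewrite -dvdn1.
move: hr; rewrite r1 => /(_ x y).
by rewrite big_ord_recl big_ord0 addr0.
Qed.

Lemma abel_gam0 (X : zmodType) n (g ginv : X -> X) gam :
  construction_pair g ginv gam -> n <> 1%N ->
  abelian_cong (@Qmul X n g ginv gam) (Qone X n)
    (normal_cong (@Qmul X n g ginv gam) (@QN X n)) ->
  forall x y, gam x y = 0.
Proof.
move=> H hn HA x y; dcp H.
have e0 : forall z : X, (val (Qmk n 0 z)).1 = 0 by move=> z; rewrite /= mod0z.
have hu : Qmk n 0 (x + g (gam x y)) = Qmk n 0 x.
  apply: HA.
  move=> th Hth HP; apply: HP; right; right.
  exists (Qmk n 0 x), (Qmk n 0 y), (Qmk n 1 0), (Qone X n), (Qmk n 1 0).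
  split; first exact: Nrel.
  - exact: Nrel.
  - by [].
  - rewrite !(mulN1 g ginv gam _ _ hn) (mulN0 g ginv gam _ (e0 y)) /=.
    rewrite !(mulN1 g ginv gam _ _ hn); congr Qmk.
    rewrite !(gam0r H) (g0 H) !addr0 (ginvDg H) (ginvD H) gamDl !(gswap H).
    rewrite -C3 C2 (ginv0 H) (g0 H) !addr0.
    rewrite -[in LHS](addrC (gam x y)) [in RHS]addrC.
    by rewrite -!addrA.
  - rewrite /Qone !(mulN1 g ginv gam _ _ hn) (mulN0 g ginv gam _ (e0 0)) /=.
    rewrite (ginv0 H) (gam0l H) (g0 H) !addr0 (mulN1 g ginv gam _ _ hn).
    by rewrite (gam0r H) (g0 H) !addr0.
have := congr1 (fun u => (val u).2) hu => /= /eqP.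
rewrite -subr_eq0 addrAC subrr add0r => /eqP /(congr1 ginv).
by rewrite gK (ginv0 H).
Qed.

Lemma group_gam0 (X : zmodType) n (g ginv : X -> X) gam :
  construction_pair g ginv gam -> n <> 1%N ->
  loop_is_group (@Qmul X n g ginv gam) ->
  forall x y, gam x y = 0.
Proof.
move=> H hn HG x y; dcp H.
have e0 : forall z : X, (val (Qmk n 0 z)).1 = 0 by move=> z; rewrite /= mod0z.
have := HG (Qmk n 0 x) (Qmk n 0 y) (Qmk n 1 0).
rewrite !(mulN1 g ginv gam _ _ hn) (mulN0 g ginv gam _ (e0 y)) /=.
rewrite !(mulN1 g ginv gam _ _ hn).
move=> /(congr1 (fun u => (val u).2)) /=.
rewrite !(gam0r H) (g0 H) !addr0 (ginvD H) !(gswap H).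
move/esym/(congr1 (fun z => z - (ginv x + ginv y + g (g (gam x y)) + g (gam x y)))).
by rewrite /= addrAC subrr add0r.
Qed.

Lemma gpow1l (X : zmodType) (g ginv : X -> X) : cancel g ginv -> cancel ginv g ->
  forall b x, gpow g ginv (1 + b) x = g (gpow g ginv b x).
Proof.
move=> gK ginvK [m|[|m]] x.
- by have -> : 1 + Posz m = Posz m.+1 by lia.
- by have -> : 1 + Negz 0 = 0 by lia; rewrite /= ginvK.
- have -> : 1 + Negz m.+1 = Negz m by lia.
  by rewrite /= ginvK.
Qed.

Lemma gpowN1l (X : zmodType) (g ginv : X -> X) : cancel g ginv -> cancel ginv g ->
  forall b x, gpow g ginv (-1 + b) x = ginv (gpow g ginv b x).
Proof.
move=> gK ginvK [[|m]|m] x.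
- by have -> : -1 + Posz 0 = Negz 0 by lia.
- have -> : -1 + Posz m.+1 = Posz m by lia.
  by rewrite /= gK.
- by have -> : -1 + Negz m = Negz m.+1 by lia.
Qed.

Lemma gpowD (X : zmodType) (g ginv : X -> X) : cancel g ginv -> cancel ginv g ->
  forall a b x, gpow g ginv (a + b) x = gpow g ginv a (gpow g ginv b x).
Proof.
move=> gK ginvK [m|m] b x.
- elim: m => [|m IH]; first by rewrite add0r.
  have -> : Posz m.+1 + b = 1 + (Posz m + b) by lia.
  by rewrite (gpow1l gK ginvK) IH.
- elim: m => [|m IH]; first by rewrite (gpowN1l gK ginvK).
  have -> : Negz m.+1 + b = -1 + (Negz m + b) by lia.
  by rewrite (gpowN1l gK ginvK) IH.
Qed.

Lemma gpowN_id (X : zmodType) (g ginv : X -> X) : cancel g ginv -> cancel ginv g ->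
  forall k, (forall y, gpow g ginv k y = y) -> forall y, gpow g ginv (- k) y = y.
Proof.
move=> gK ginvK k hk y.
by rewrite -{1}(hk y) -(gpowD gK ginvK) addNr.
Qed.

Lemma gpow_mul_id (X : zmodType) (g ginv : X -> X) n : cancel g ginv -> cancel ginv g ->
  ((0 < n)%N -> forall x, iter n g x = x) ->
  forall q y, gpow g ginv (q * n%:Z) y = y.
Proof.
move=> gK ginvK hper q y.
case: n hper => [|n] hper; first by rewrite mulr0.
have hn : forall y, gpow g ginv (Posz n.+1) y = y by exact: hper.
have hP : forall m y, gpow g ginv (Posz m * Posz n.+1) y = y.
  elim=> [|m IH] z; first by rewrite mul0r.
  have -> : Posz m.+1 * Posz n.+1 = Posz n.+1 + Posz m * Posz n.+1 by lia.
  by rewrite (gpowD gK ginvK) IH hn.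
case: q => m; first exact: hP.
have -> : Negz m * Posz n.+1 = - (Posz m.+1 * Posz n.+1) by lia.
exact: (gpowN_id gK ginvK (hP m.+1)).
Qed.

Lemma gpow_per (X : zmodType) (g ginv : X -> X) n : cancel g ginv -> cancel ginv g ->
  ((0 < n)%N -> forall x, iter n g x = x) ->
  forall a b, (a %% n%:Z)%Z = (b %% n%:Z)%Z -> forall y, gpow g ginv a y = gpow g ginv b y.
Proof.
move=> gK ginvK hper a b hab y.
rewrite (divz_eq a n%:Z) (divz_eq b n%:Z) hab !(gpowD gK ginvK).
by rewrite !(gpow_mul_id gK ginvK hper).
Qed.

Lemma gadd (X : zmodType) (g ginv : X -> X) gam :
  construction_pair g ginv gam -> (forall x y, gam x y = 0) ->
  forall a b, g (a + b) = g a + g b.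
Proof.
move=> H hz a b; dcp H.
have := C1 a b; rewrite hz (ginv0 H) (ginv0 H) !addr0 => <-.
by rewrite ginvK.
Qed.

Lemma gpow_0 (X : zmodType) (g ginv : X -> X) gam :
  construction_pair g ginv gam -> forall k, gpow g ginv k 0 = 0.
Proof.
move=> H [m|m] /=.
- by elim: m => //= m ->; rewrite (g0 H).
- by elim: m => [|m IH] /=; rewrite ?IH (ginv0 H).
Qed.

Lemma gpow_add (X : zmodType) (g ginv : X -> X) gam :
  construction_pair g ginv gam -> (forall x y, gam x y = 0) ->
  forall k a b, gpow g ginv k (a + b) = gpow g ginv k a + gpow g ginv k b.
Proof.
move=> H hz k; have hg := gadd H hz.
have hgi : forall a b, ginv (a + b) = ginv a + ginv b.
  by move=> a b; rewrite (ginvD H) hz !(g0 H) !addr0.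
case: k => m a b /=.
- by elim: m => //= m ->; rewrite hg.
- by elim: m => [|m IH] /=; rewrite ?IH hgi.
Qed.

Lemma mulZv (X : zmodType) n (g ginv : X -> X) gam :
  construction_pair g ginv gam -> (forall x y, gam x y = 0) ->
  forall u v : Qcar X n, val (Qmul g ginv gam u v) =
    ((((val u).1 + (val v).1) %% n%:Z)%Z,
     gpow g ginv (- (val v).1) (val u).2 + (val v).2).
Proof.
move=> H hz u v; rewrite /Qmul /= hz.
have hs : forall (i j : int), Isum i j (fun k => gpow g ginv (- k) 0) = 0.
  move=> i j; rewrite /Isum; case: ifP => _; apply: big1 => t _; exact: gpow_0 H _.
by rewrite hs addr0.
Qed.

Lemma assocZ (X : zmodType) n (g ginv : X -> X) gam :
  construction_pair g ginv gam -> (forall x y, gam x y = 0) ->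
  ((0 < n)%N -> forall x, iter n g x = x) ->
  loop_is_group (@Qmul X n g ginv gam).
Proof.
move=> H hz hper u v w; dcp H.
apply: val_inj; rewrite !(mulZv H hz) /=.
congr pair; first by rewrite modzDml modzDmr addrA.
rewrite !(gpow_add H hz) addrA; congr (_ + _ + _).
rewrite -(gpowD gK ginvK); apply: (gpow_per gK ginvK hper).
by rewrite modzNm opprD addrC.
Qed.

Lemma mod_cancel n (a u v : int) : (u %% n%:Z)%Z = u -> (v %% n%:Z)%Z = v ->
  ((u + a) %% n%:Z)%Z = ((v + a) %% n%:Z)%Z -> u = v.
Proof.
move=> hu hv h.
have : ((u + a - a) %% n%:Z)%Z = ((v + a - a) %% n%:Z)%Z.
  by rewrite -modzDml h modzDml.
by rewrite !addrK hu hv.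
Qed.

Lemma gpow_inj (X : zmodType) (g ginv : X -> X) : cancel g ginv -> cancel ginv g ->
  forall k a b, gpow g ginv k a = gpow g ginv k b -> a = b.
Proof.
move=> gK ginvK k a b h.
have := congr1 (gpow g ginv (- k)) h.
by rewrite -!(gpowD gK ginvK) addNr.
Qed.

Lemma lcancelZ (X : zmodType) n (g ginv : X -> X) gam :
  construction_pair g ginv gam -> (forall x y, gam x y = 0) ->
  forall s u v : Qcar X n, Qmul g ginv gam s u = Qmul g ginv gam s v -> u = v.
Proof.
move=> H hz s u v /(congr1 val); rewrite !(mulZv H hz) => -[h1 h2].
have e1 : (val u).1 = (val v).1.
  by apply: (mod_cancel (a := (val s).1) (Qrep u) (Qrep v)); rewrite addrC h1 addrC.
rewrite e1 in h2; move/addrI: h2 => e2.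
by rewrite (Qeta u) (Qeta v) e1 e2.
Qed.

Lemma rcancelZ (X : zmodType) n (g ginv : X -> X) gam :
  construction_pair g ginv gam -> (forall x y, gam x y = 0) ->
  forall s u v : Qcar X n, Qmul g ginv gam u s = Qmul g ginv gam v s -> u = v.
Proof.
move=> H hz s u v; dcp H.
move/(congr1 val); rewrite !(mulZv H hz) => -[h1 h2].
have e1 : (val u).1 = (val v).1 by apply: (mod_cancel (a := (val s).1) (Qrep u) (Qrep v)).
move/addIr: h2 => /(gpow_inj gK ginvK) e2.
by rewrite (Qeta u) (Qeta v) e1 e2.
Qed.

Lemma mulQ1 (X : zmodType) n (g ginv : X -> X) gam :
  construction_pair g ginv gam -> (forall x y, gam x y = 0) ->
  forall u : Qcar X n, Qmul g ginv gam u (Qone X n) = u.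
Proof.
move=> H hz u; apply: val_inj; rewrite (mulZv H hz) /= mod0z oppr0 !addr0 Qrep.
by case: u => [[i x] hi].
Qed.

Lemma rho1 (X : zmodType) n (g ginv : X -> X) gam :
  construction_pair g ginv gam -> (forall x y, gam x y = 0) ->
  forall u v : Qcar X n, normal_cong (Qmul g ginv gam) (@QN X n) u v ->
  (val u).1 = (val v).1.
Proof.
move=> H hz u v /(_ u) [h _].
have [|m [hm e]] := h.
  exists (Qone X n); split; first by rewrite /QN /= mod0z.
  by rewrite (mulQ1 H hz).
by rewrite {1}e (mulZv H hz) /= hm addr0 Qrep.
Qed.

Lemma tcase (X : zmodType) n (g ginv : X -> X) gam :
  construction_pair g ginv gam -> (forall x y, gam x y = 0) ->
  forall u b a : Qcar X n, (val a).1 = 0 ->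
  Qmul g ginv gam u b = Qmul g ginv gam b a ->
  (val u).1 = 0 /\ gpow g ginv (- (val b).1) (val u).2 = (val a).2.
Proof.
move=> H hz u b a ha /(congr1 val); rewrite !(mulZv H hz) ha oppr0 => -[h1 h2].
split.
  apply: (mod_cancel (a := (val b).1) (Qrep u)); first exact: mod0z.
  by rewrite h1 addr0 add0r.
by move: h2; rewrite /= [RHS]addrC => /addIr.
Qed.

Lemma abelZ (X : zmodType) n (g ginv : X -> X) gam :
  construction_pair g ginv gam -> (forall x y, gam x y = 0) ->
  ((0 < n)%N -> forall x, iter n g x = x) ->
  abelian_cong (@Qmul X n g ginv gam) (Qone X n)
    (normal_cong (@Qmul X n g ginv gam) (@QN X n)).
Proof.
move=> H hz hper u v Hc; have HA := assocZ H hz hper.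
have hl := @lcancelZ X n g ginv gam H hz; have hr := @rcancelZ X n g ginv gam H hz.
apply: (Hc eq).
  split; first by [].
  split; first by move=> ? ? ->.
  split; first by move=> ? ? ? -> ->.
  split; first by move=> ? ? ? ? -> ->.
  split.
    by move=> x x' u0 u0' z z' -> -> e1 e2; apply: (hl x'); rewrite e1 e2.
  by move=> y y' u0 u0' z z' -> -> e1 e2; apply: (hr y'); rewrite e1 e2.
move=> p q [[a [b1 [c1 [ha hb e1 e2]]]]|[[a [b1 [b2 [c1 [c2 [ha _ _ e1 e2]]]]]]|
  [a [b1 [b2 [c1 [c2 [ha _ _ e1 e2]]]]]]]].
- have a0 : (val a).1 = 0 by rewrite -(rho1 H hz ha) /= mod0z.
  have [p0 hp] := tcase H hz a0 e1.
  have [q0 hq] := tcase H hz a0 e2.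
  have hbc := rho1 H hz hb.
  rewrite hbc -hq in hp; have dG := H; case: dG => gK [ginvK _].
  move/(gpow_inj gK ginvK): hp => e.
  by rewrite (Qeta p) (Qeta q) p0 q0 e.
- rewrite HA in e1; rewrite HA in e2.
  by rewrite (hl _ _ _ e1) (hl _ _ _ e2).
- rewrite -HA in e1; rewrite -HA in e2.
  by rewrite (hr _ _ _ e1) (hr _ _ _ e2).
Qed.

Theorem mainTheorem9 (X : zmodType) (n : nat) (g ginv : X -> X)
    (gam : X -> X -> X)
    (Hcp : construction_pair g ginv gam)
    (HC : cyclic_admissible g gam n) :
  abelian_cong (@Qmul X n g ginv gam) (Qone X n)
    (normal_cong (@Qmul X n g ginv gam) (@QN X n))
  <-> loop_is_group (@Qmul X n g ginv gam).
Proof.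
have hper : (0 < n)%N -> forall x, iter n g x = x.
  move=> n0 x; have [[m [[m0 hm _] /dvdnP [k ->]]] _] := HC n0.
  elim: k => [|k IH]; first by rewrite mul0n.
  by rewrite mulSn iterD IH hm.
have [n1|n1] := eqVneq n 1%N.
  have hz : forall x y, gam x y = 0 by subst n; exact: admiss1 HC.
  by split=> _; [exact: assocZ | exact: abelZ].
have n1' : n <> 1%N by apply/eqP.
split=> h.
  exact: assocZ Hcp (abel_gam0 Hcp n1' h) hper.
exact: abelZ Hcp (group_gam0 Hcp n1' h) hper.
Qed.
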